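(* Let $n\ge 2$ and let $q$ be a prime power, and identify $E_q=\{0,1,\dots,q-1\}$ with the finite field $\mathbb{F}_q$, so that $E_q^n$ is an $n$-dimensional vector space over $\mathbb{F}_q$. Then every linear subspace $L\subseteq E_q^n$ with $|L|>1$ is metrically dense: $R(L)\le R(B)$ for every subset $B\subseteq E_q^n$ that is isometric to $L$.
   Context: $E_q^n$ carries the Hamming distance $d_H(x,y)=|\{i: x_i\neq y_i\}|$. For $A\subseteq E_q^n$, $R(A)$ is the number of coordinates $i$ such that the $i$-th coordinates of the elements of $A$ are not all equal (the number of non-constant columns of the matrix whose rows are the elements of $A$). Two subsets $A,B\subseteq E_q^n$ are isometric if there is a bijection $\phi:A\to B$ with $d_H(\phi(x),\phi(y))=d_H(x,y)$ for all $x,y\in A$. *)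

(* Defs.v *)
From HB Require Import structures.
From mathcomp Require Import all_boot all_order all_algebra.
Set Implicit Arguments. Unset Strict Implicit. Unset Printing Implicit Defensive.

(* Words of length n over an alphabet T are row vectors 'rV[T]_n;
   coordinate i of x is x ord0 i. *)

Definition dH (T : eqType) (n : nat) (x y : 'rV[T]_n) : nat :=
  #|[set i : 'I_n | x ord0 i != y ord0 i]|.

Definition R (T : finType) (n : nat) (A : {set 'rV[T]_n}) : nat :=
  #|[set i : 'I_n | [exists x in A, exists y in A, x ord0 i != y ord0 i]]|.

Definition isometric (T : finType) (n : nat) (A B : {set 'rV[T]_n}) : Prop :=
  exists phi : 'rV[T]_n -> 'rV[T]_n,
    [/\ {in A &, injective phi}, phi @: A = B &
        {in A &, forall x y, dH (phi x) (phi y) = dH x y}].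

Definition vset (F : finFieldType) (n : nat) (L : {vspace 'rV[F]_n}) :
  {set 'rV[F]_n} := [set x | x \in L].

(* Main.v *)
Require Import Defs.
From HB Require Import structures.
From mathcomp Require Import all_boot all_order all_algebra.
From mathcomp Require Import zify.
Set Implicit Arguments. Unset Strict Implicit. Unset Printing Implicit Defensive.

Section Gen.
Variables (T : finType) (n : nat).
Implicit Types (A : {set 'rV[T]_n}) (x y : 'rV[T]_n).

Definition agree x y : nat := \sum_(i < n) (x ord0 i == y ord0 i).
Definition EE A (i : 'I_n) : nat := \sum_(x in A) \sum_(y in A) (x ord0 i == y ord0 i).
Definition nc A (i : 'I_n) : bool := [exists x in A, exists y in A, x ord0 i != y ord0 i].
Definition cf A (i : 'I_n) (a : T) : nat := #|[set y in A | y ord0 i == a]|.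

Lemma agree_dH x y : agree x y + dH x y = n.
Proof.
rewrite /agree /dH -sum1dep_card [X in _ + X]big_mkcond /= -big_split /=.
rewrite (eq_bigr (fun _ => 1)) ?sum1_card ?card_ord //.
by move=> i _; case: eqP.
Qed.

Lemma sum_agree A : \sum_(x in A) \sum_(y in A) agree x y = \sum_(i < n) EE A i.
Proof.
rewrite /EE /agree.
rewrite (eq_bigr (fun x => \sum_(i < n) \sum_(y in A) (x ord0 i == y ord0 i))).
  by rewrite exchange_big.
by move=> x _; rewrite exchange_big.
Qed.

Lemma iso_sum A B : isometric A B ->
  \sum_(x in B) \sum_(y in B) agree x y = \sum_(x in A) \sum_(y in A) agree x y.
Proof.
case=> phi [inj <- Hd].
rewrite big_imset //; apply: eq_bigr => x Hx.
rewrite big_imset //; apply: eq_bigr => y Hy.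
have h1 := agree_dH (phi x) (phi y); have h2 := agree_dH x y.
rewrite Hd // in h1; lia.
Qed.

Lemma iso_card A B : isometric A B -> #|B| = #|A|.
Proof. by case=> phi [inj <- _]; rewrite card_in_imset. Qed.

Lemma EE_le A i : EE A i <= #|A| * #|A|.
Proof.
rewrite /EE; apply: (@leq_trans (\sum_(x in A) #|A|)); last by rewrite sum_nat_const.
apply: leq_sum => x _; apply: (@leq_trans (\sum_(y in A) 1)); last by rewrite sum1_card.
by apply: leq_sum => y _; case: eqP.
Qed.

Lemma EE_const A i : ~~ nc A i -> EE A i = #|A| * #|A|.
Proof.
move=> H; rewrite /EE -sum1_card big_distrl /=; apply: eq_bigr => x Hx.
rewrite mul1n; apply: eq_bigr => y Hy.
case: eqP => // Hne; case/negP: H.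
apply/existsP; exists x; rewrite Hx /=; apply/existsP; exists y; rewrite Hy /=.
by apply/eqP.
Qed.

Lemma gen_fiber A i (G : T -> nat) :
  \sum_(x in A) G (x ord0 i) = \sum_(a : T) cf A i a * G a.
Proof.
rewrite (partition_big (fun x => x ord0 i) predT) //=.
apply: eq_bigr => a _.
rewrite (eq_bigr (fun _ => G a)); last by move=> x /andP[_ /eqP ->].
rewrite /cf -sum1dep_card big_distrl /=.
by apply: eq_bigr => x _; rewrite mul1n.
Qed.

Lemma sum_cf A i : \sum_(a : T) cf A i a = #|A|.
Proof.
have := gen_fiber A i (fun _ => 1).
rewrite sum_nat_const muln1 => ->.
by apply: eq_bigr => a _; rewrite muln1.
Qed.

Lemma EE_cf A i : EE A i = \sum_(a : T) cf A i a * cf A i a.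
Proof.
rewrite -gen_fiber /EE; apply: eq_bigr => x _.
rewrite /cf -sum1dep_card big_mkcondr /=; apply: eq_bigr => y _.
by rewrite eq_sym; case: eqP.
Qed.

Lemma CS (c : T -> nat) : (\sum_(a : T) c a) * (\sum_(a : T) c a) <= #|T| * \sum_(a : T) c a * c a.
Proof.
rewrite big_distrlr /=.
have H : 2 * (\sum_(a : T) \sum_(b : T) c a * c b) <= 2 * (#|T| * \sum_(a : T) c a * c a).
  rewrite big_distrr /=.
  apply: (@leq_trans (\sum_(a : T) \sum_(b : T) (c a ^ 2 + c b ^ 2))).
    apply: leq_sum => a _; rewrite big_distrr /=; apply: leq_sum => b _.
    exact: (nat_Cauchy (c a) (c b)).
  rewrite (eq_bigr (fun a => #|T| * (c a * c a) + \sum_(b : T) c b * c b)).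
    rewrite big_split /= -big_distrr /= sum_nat_const cardT -cardE; lia.
  move=> a _; rewrite big_split /= sum_nat_const cardT -cardE expnS expn1 .
  by congr (_ + _); apply: eq_bigr => b _; rewrite expnS expn1.
by rewrite -(leq_pmul2l (isT : 0 < 2)).
Qed.

End Gen.

Lemma sum_filt_const n (P : pred 'I_n) k : \sum_(i | P i) k = #|[set i | P i]| * k.
Proof. by rewrite -sum1dep_card big_distrl /=; apply: eq_bigr => i _; rewrite mul1n. Qed.

Lemma card_filtC n (P : pred 'I_n) : #|[set i | P i]| + #|[set i | ~~ P i]| = n.
Proof. rewrite -!sum1dep_card; transitivity (\sum_(i < n) 1); last by rewrite sum1_card card_ord.
by rewrite [RHS](bigID P) /=. Qed.

Lemma sum_const_full (T : finType) (k : nat) : \sum_(a : T) k = #|T| * k.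
Proof. by rewrite sum_nat_const cardT -cardE. Qed.

Section Lin.
Import GRing.Theory.
Local Open Scope ring_scope.
Variables (F : finFieldType) (n : nat) (L : {vspace 'rV[F]_n}).

Lemma fiber_L i : nc (vset L) i -> forall a, cf (vset L) i a = cf (vset L) i 0%R.
Proof.
rewrite /cf; case/existsP=> x /andP[Hx /existsP[y /andP[Hy Hxy]]] a.
rewrite !inE in Hx Hy.
pose w := (x ord0 i - y ord0 i)^-1 *: (x - y).
have Hw : w \in L by apply: memvZ; apply: memvB.
have Hwi : w ord0 i = 1.
  by rewrite /w !mxE mulVf // subr_eq0.
clearbody w.
have -> : [set z in vset L | z ord0 i == a] =
          (fun z => z + a *: w) @: [set z in vset L | z ord0 i == 0%R].
  apply/setP => z; rewrite !inE; apply/idP/idP.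
    case/andP=> Hz /eqP Hza; apply/imsetP; exists (z - a *: w).
      rewrite !inE memvB //; last exact: memvZ.
      by rewrite !mxE Hwi mulr1 Hza subrr eqxx.
    by rewrite /= addrNK.
  case/imsetP=> z' ; rewrite !inE => /andP[Hz' /eqP Hz0] ->.
  rewrite memvD //; last exact: memvZ.
  by rewrite !mxE Hz0 Hwi mulr1 add0r eqxx.
rewrite card_imset //; exact: addIr.
Qed.

Local Close Scope ring_scope.
Lemma EE_L i : nc (vset L) i -> #|F| * EE (vset L) i = #|vset L| * #|vset L|.
Proof.
move=> H; rewrite EE_cf.
rewrite (eq_bigr (fun _ => cf (vset L) i 0%R * cf (vset L) i 0%R)); last by move=> a _; rewrite (fiber_L H a).
rewrite sum_const_full -(sum_cf (vset L) i).
rewrite (eq_bigr (fun _ => cf (vset L) i 0%R)); last by move=> a _; rewrite (fiber_L H a).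
rewrite sum_const_full; by rewrite !mulnA [_ * #|F| * _]mulnC !mulnA (mulnC #|F|).
Qed.

End Lin.

Lemma arith (n a b q M : nat) : a <= n -> b <= n -> 1 < q -> 0 < M ->
  b*M + (n-b)*(q*M) <= a*M + (n-a)*(q*M) -> a <= b.
Proof.
move=> ha hb hq hM H; rewrite leqNgt; apply/negP => hab.
have e : n - b = (n - a) + (a - b) by lia.
have e2 : a = b + (a - b) by lia.
rewrite e {2}e2 in H.
have : (a - b) * M < (a - b) * (q * M).
  rewrite ltn_mul2l subn_gt0 hab /=. rewrite -{1}(mul1n M) ltn_mul2r hM hq //.
rewrite !mulnDl in H. lia.
Qed.

Unset Implicit Arguments.
Theorem mainTheorem3 (F : finFieldType) (n : nat) (L : {vspace 'rV[F]_n}) :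
  (2 <= n)%N -> (1 < #|vset L|)%N ->
  forall B : {set 'rV[F]_n}, isometric (vset L) B -> (R (vset L) <= R B)%N.
Proof.
move=> _ hL B Hiso.
set A := vset L.
have hB := iso_card Hiso.
have Hs : \sum_(i < n) EE B i = \sum_(i < n) EE A i by rewrite -!sum_agree; exact: iso_sum.
set m := #|A|.
have RA : R A = #|[set i | nc A i]| by [].
have RB : R B = #|[set i | nc B i]| by [].
have cA := card_filtC (nc A). have cB := card_filtC (nc B).
have up : #|F| * \sum_(i < n) EE A i <= R A * (m * m) + (n - R A) * (#|F| * (m * m)).
  rewrite big_distrr /= (bigID (nc A)) /=.
  apply: leq_add.
    rewrite (eq_bigr (fun _ => m * m)); last by move=> i Hi; rewrite EE_L.
    by rewrite sum_filt_const.
  apply: (@leq_trans (\sum_(i | ~~ nc A i) #|F| * (m * m))).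
    by apply: leq_sum => i _; rewrite leq_mul2l EE_le orbT.
  rewrite sum_filt_const; have -> : #|[set i | ~~ nc A i]| = n - R A by lia.
  by [].
have lo : R B * (m * m) + (n - R B) * (#|F| * (m * m)) <= #|F| * \sum_(i < n) EE B i.
  rewrite big_distrr /= [X in _ <= X](bigID (nc B)) /=.
  apply: leq_add.
    rewrite RB -sum_filt_const; apply: leq_sum => i _.
    rewrite /m -hB -{1 2}(sum_cf B i) EE_cf; exact: CS.
  have -> : n - R B = #|[set i | ~~ nc B i]| by lia.
  rewrite -sum_filt_const; apply: leq_sum => i Hi; by rewrite EE_const // hB.
apply: (arith (n := n) (q := #|F|) (M := m * m)).
- lia.
- lia.
- exact: card_finNzRing_gt1.
- rewrite muln_gt0 andbb; exact: ltnW hL.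
- by rewrite Hs in lo; apply: leq_trans lo up.
Qed.
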